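(* Let $T\in\mathcal{L}(\mathcal{H})$ be a contraction with $\dim\mathcal{D}_T=\dim\mathcal{D}_{T^*}=N<\infty$, and let $V\in\mathcal{L}(\mathcal{H}')$ be unitary; put $T_1=T\oplus V$ on $\mathcal{H}\oplus\mathcal{H}'$. Suppose that the map $\tau:\mathcal{U}_T\to\mathfrak{K}$, $\mathbf{U}\mapsto\overline{W(\mathbf{U})}$, wraps $\overline{W(T)}$, where $\mathcal{U}_T$ is the set of unitary $N$-dilations of $T$ to $\mathcal{H}\oplus\mathbb{C}^N$. Then the analogous map $\tau_1:\mathcal{U}_{T_1}\to\mathfrak{K}$, $\mathbf{U}\mapsto\overline{W(\mathbf{U})}$, wraps $\overline{W(T_1)}$, where $\mathcal{U}_{T_1}$ is the set of unitary $N$-dilations of $T_1$ to $\mathcal{H}\oplus\mathcal{H}'\oplus\mathbb{C}^N$.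
   Context: For a contraction $T$, $\mathcal{D}_T=\overline{\operatorname{ran}(I-T^*T)^{1/2}}$ and $\mathcal{D}_{T^*}=\overline{\operatorname{ran}(I-TT^* )^{1/2}}$. A unitary $N$-dilation of $T\in\mathcal{L}(\mathcal{H})$ to $\mathcal{H}\oplus\mathbb{C}^N$ is a unitary $\mathbf{U}$ on $\mathcal{H}\oplus\mathbb{C}^N$ with $P_{\mathcal{H}}\mathbf{U}|_{\mathcal{H}}=T$. $W$ denotes numerical range. $\mathfrak{K}$ is the space of nonempty compact subsets of $\mathbb{C}$ with the Hausdorff distance; a map $\tau$ from a set $Y$ to $\mathfrak{K}$ wraps $A\in\mathfrak{K}$ if for every open half-plane $\mathbb{H}$ containing $A$ there exists $y\in Y$ with $\tau(y)\subset\mathbb{H}$. *)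

(* Defs.v *)
From Stdlib Require Import Reals.
From mathcomp Require Import all_boot.

Set Implicit Arguments.
Unset Strict Implicit.
Unset Printing Implicit Defensive.

Local Open Scope R_scope.

Definition C : Type := (R * R)%type.
Definition Cre (z : C) : R := fst z.
Definition Cim (z : C) : R := snd z.
Definition C0 : C := (0, 0).
Definition C1 : C := (1, 0).
Definition Cadd (z w : C) : C := (fst z + fst w, snd z + snd w).
Definition Copp (z : C) : C := (- fst z, - snd z).
Definition Cmul (z w : C) : C :=
  (fst z * fst w - snd z * snd w, fst z * snd w + snd z * fst w).
Definition Cconj (z : C) : C := (fst z, - snd z).
Definition Cmod (z : C) : R := sqrt (fst z * fst z + snd z * snd z).
Definition Cdist (z w : C) : R := Cmod (Cadd z (Copp w)).

(* inner product linear in the first argument, conjugate-linear in the second *)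
Record IPS := {
  car :> Type;
  vzero : car;
  vadd : car -> car -> car;
  vopp : car -> car;
  vscal : C -> car -> car;
  ip : car -> car -> C
}.

Arguments vzero {_}.
Arguments vadd {_}.
Arguments vopp {_}.
Arguments vscal {_}.
Arguments ip {_}.

Definition vnorm {X : IPS} (x : X) : R := sqrt (fst (ip x x)).
Definition vsub {X : IPS} (x y : X) : X := vadd x (vopp y).

Definition Cauchy_seq {X : IPS} (u : nat -> X) : Prop :=
  forall eps, 0 < eps -> exists M : nat, forall m n : nat,
    (M <= m)%nat -> (M <= n)%nat -> vnorm (vsub (u m) (u n)) < eps.

Definition converges_to {X : IPS} (u : nat -> X) (l : X) : Prop :=
  forall eps, 0 < eps -> exists M : nat, forall n : nat,
    (M <= n)%nat -> vnorm (vsub (u n) l) < eps.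

Definition is_hilbert (X : IPS) : Prop :=
  (forall x y z : X, vadd x (vadd y z) = vadd (vadd x y) z) /\
  (forall x y : X, vadd x y = vadd y x) /\
  (forall x : X, vadd x vzero = x) /\
  (forall x : X, vadd x (vopp x) = vzero) /\
  (forall x : X, vscal C1 x = x) /\
  (forall (a b : C) (x : X), vscal a (vscal b x) = vscal (Cmul a b) x) /\
  (forall (a : C) (x y : X), vscal a (vadd x y) = vadd (vscal a x) (vscal a y)) /\
  (forall (a b : C) (x : X), vscal (Cadd a b) x = vadd (vscal a x) (vscal b x)) /\
  (forall x y z : X, ip (vadd x y) z = Cadd (ip x z) (ip y z)) /\
  (forall (a : C) (x y : X), ip (vscal a x) y = Cmul a (ip x y)) /\
  (forall x y : X, ip y x = Cconj (ip x y)) /\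
  (forall x : X, 0 <= fst (ip x x)) /\
  (forall x : X, ip x x = C0 -> x = vzero) /\
  (forall u : nat -> X, Cauchy_seq u -> exists l, converges_to u l).

Definition prodIPS (X Y : IPS) : IPS := {|
  car := (X * Y)%type;
  vzero := (vzero, vzero);
  vadd := fun p q => (vadd p.1 q.1, vadd p.2 q.2);
  vopp := fun p => (vopp p.1, vopp p.2);
  vscal := fun a p => (vscal a p.1, vscal a p.2);
  ip := fun p q => Cadd (ip p.1 q.1) (ip p.2 q.2)
|}.

Definition CN (N : nat) : IPS := {|
  car := 'I_N -> C;
  vzero := fun _ => C0;
  vadd := fun v w i => Cadd (v i) (w i);
  vopp := fun v i => Copp (v i);
  vscal := fun a v i => Cmul a (v i);
  ip := fun v w => \big[Cadd/C0]_(i < N) Cmul (v i) (Cconj (w i))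
|}.

Definition is_linear {X : IPS} (A : X -> X) : Prop :=
  forall (a : C) (x y : X), A (vadd (vscal a x) y) = vadd (vscal a (A x)) (A y).

Definition bounded_linear {X : IPS} (A : X -> X) : Prop :=
  is_linear A /\ exists K : R, forall x : X, vnorm (A x) <= K * vnorm x.

Definition is_adjoint {X : IPS} (A B : X -> X) : Prop :=
  forall x y : X, ip (A x) y = ip x (B y).

Definition contraction {X : IPS} (A : X -> X) : Prop :=
  bounded_linear A /\ forall x : X, vnorm (A x) <= vnorm x.

Definition unitary {X : IPS} (U : X -> X) : Prop :=
  bounded_linear U /\ exists Us : X -> X,
    is_adjoint U Us /\ (forall x, U (Us x) = x) /\ (forall x, Us (U x) = x).

Definition is_pos_sqrt {X : IPS} (A S : X -> X) : Prop :=
  bounded_linear S /\ is_adjoint S S /\ (forall x, 0 <= fst (ip (S x) x)) /\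
  (forall x, S (S x) = A x).

Definition closure_range {X : IPS} (S : X -> X) : X -> Prop :=
  fun y => forall eps, 0 < eps -> exists x, vnorm (vsub (S x) y) < eps.

Definition has_dim {X : IPS} (M : X -> Prop) (N : nat) : Prop :=
  exists e : 'I_N -> X,
    (forall i j, ip (e i) (e j) = if i == j then C1 else C0) /\
    (forall y, M y <-> exists c : 'I_N -> C,
         y = \big[vadd/vzero]_(i < N) vscal (c i) (e i)).

(* dim D_A = N, where D_A = closure of ran (I - As A)^{1/2}, As the adjoint of A *)
Definition defect_dim {X : IPS} (A As : X -> X) (N : nat) : Prop :=
  exists S : X -> X, is_pos_sqrt (fun x => vsub x (As (A x))) S /\
    has_dim (closure_range S) N.

Definition numrange {X : IPS} (A : X -> X) : C -> Prop :=
  fun z => exists x : X, vnorm x = 1 /\ z = ip (A x) x.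

Definition Cclosure (K : C -> Prop) : C -> Prop :=
  fun z => forall eps, 0 < eps -> exists w, K w /\ Cdist z w < eps.

Definition half_plane (a b c : R) : C -> Prop :=
  fun z => a * Cre z + b * Cim z < c.

Definition wraps {Y : Type} (P : Y -> Prop) (tau : Y -> C -> Prop) (A : C -> Prop) : Prop :=
  forall a b c : R, (a, b) <> (0, 0) ->
    (forall z, A z -> half_plane a b c z) ->
    exists y, P y /\ forall z, tau y z -> half_plane a b c z.

Definition unitary_dilation {X : IPS} (N : nat) (T : X -> X)
  (U : prodIPS X (CN N) -> prodIPS X (CN N)) : Prop :=
  unitary U /\ forall x : X, (U (x, vzero)).1 = T x.

Definition opsum {X Y : IPS} (A : X -> X) (B : Y -> Y) : prodIPS X Y -> prodIPS X Y :=
  fun p => (A p.1, B p.2).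

Arguments unitary_dilation {X} N T U.
Arguments wraps {Y} P tau A.

(* Main.v *)
Require Import Defs.
From Stdlib Require Import Reals Lra Psatz Classical ClassicalEpsilon.
From mathcomp Require Import all_boot.
Local Open Scope R_scope.

Ltac cunf := unfold half_plane, Cadd, Cmul, Cconj, Copp, C0, C1, Cre, Cim in *; cbv beta in *.
Ltac ceq := cunf; apply injective_projections; simpl; ring.

Definition preip (X : IPS) : Prop :=
 (forall x y z : X, ip (vadd x y) z = Cadd (ip x z) (ip y z)) /\
 (forall a (x y : X), ip (vscal a x) y = Cmul a (ip x y)) /\
 (forall x y : X, ip y x = Cconj (ip x y)) /\
 (forall x : X, 0 <= fst (ip x x)) /\
 (forall z : X, ip vzero z = C0).

Lemma hilbert_preip (X : IPS) : is_hilbert X -> preip X.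
Proof.
move=> [_ [_ [h0 [_ [_ [_ [_ [_ [hadd [hsc [hcj [hpos _]]]]]]]]]]]].
split; [exact hadd|split; [exact hsc|split; [exact hcj|split; [exact hpos|]]]].
move=> z. have := hadd vzero vzero z. rewrite h0.
case: (ip vzero z) => p q. cunf. case=> h1 h2.
apply injective_projections; simpl; lra.
Qed.

Lemma big_Cadd (I : Type) (r : seq I) (F G : I -> Defs.C) :
  \big[Cadd/C0]_(i <- r) Cadd (F i) (G i) =
  Cadd (\big[Cadd/C0]_(i <- r) F i) (\big[Cadd/C0]_(i <- r) G i).
Proof. elim: r => [|i r IH]; rewrite ?big_nil ?big_cons ?IH; ceq. Qed.

Lemma big_Cscal (I : Type) (r : seq I) a (F : I -> Defs.C) :
  \big[Cadd/C0]_(i <- r) Cmul a (F i) = Cmul a (\big[Cadd/C0]_(i <- r) F i).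
Proof. elim: r => [|i r IH]; rewrite ?big_nil ?big_cons ?IH; ceq. Qed.

Lemma big_Cconj (I : Type) (r : seq I) (F : I -> Defs.C) :
  \big[Cadd/C0]_(i <- r) Cconj (F i) = Cconj (\big[Cadd/C0]_(i <- r) F i).
Proof. elim: r => [|i r IH]; rewrite ?big_nil ?big_cons ?IH; ceq. Qed.

Lemma big_Cpos (I : Type) (r : seq I) (F : I -> Defs.C) :
  (forall i, 0 <= fst (F i)) -> 0 <= fst (\big[Cadd/C0]_(i <- r) F i).
Proof.
move=> h; elim: r => [|i r IH]; rewrite ?big_nil ?big_cons; cunf; simpl.
  lra. have := h i; lra.
Qed.

Lemma big_C0 (I : Type) (r : seq I) (F : I -> Defs.C) :
  (forall i, F i = C0) -> \big[Cadd/C0]_(i <- r) F i = C0.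
Proof. move=> h; elim: r => [|i r IH]; rewrite ?big_nil ?big_cons ?IH ?h; ceq. Qed.

Lemma CN_preip N : preip (CN N).
Proof.
split; [|split; [|split; [|split]]].
- move=> x y z /=. rewrite -big_Cadd. apply: eq_bigr => i _. ceq.
- move=> a x y /=. rewrite -big_Cscal. apply: eq_bigr => i _. ceq.
- move=> x y /=. rewrite -big_Cconj. apply: eq_bigr => i _. ceq.
- move=> x /=. apply: big_Cpos => i. cunf; simpl; nra.
- move=> z /=. apply: big_C0 => i. ceq.
Qed.

Lemma prod_preip X Y : preip X -> preip Y -> preip (prodIPS X Y).
Proof.
move=> [a1 [s1 [c1 [p1 z1]]]] [a2 [s2 [c2 [p2 z2]]]].
split; [|split; [|split; [|split]]].
- move=> x y z /=. rewrite a1 a2. ceq.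
- move=> a x y /=. rewrite s1 s2. ceq.
- move=> x y /=. rewrite c1 c2. ceq.
- move=> x /=. have := p1 x.1; have := p2 x.2. cunf; simpl; lra.
- move=> z /=. rewrite z1 z2. ceq.
Qed.
Section D.
Variable X : IPS.
Hypothesis hX : preip X.

Lemma ipA (x y z : X) : ip (vadd x y) z = Cadd (ip x z) (ip y z).
Proof. by case: hX. Qed.
Lemma ipS a (x y : X) : ip (vscal a x) y = Cmul a (ip x y).
Proof. by case: hX => _ []. Qed.
Lemma ipC (x y : X) : ip y x = Cconj (ip x y).
Proof. by case: hX => _ [] _ []. Qed.
Lemma ipP (x : X) : 0 <= fst (ip x x).
Proof. by case: hX => _ [] _ [] _ []. Qed.
Lemma ip0 (z : X) : ip vzero z = C0.
Proof. by case: hX => _ [] _ [] _ []. Qed.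

Lemma ipAr (x y z : X) : ip z (vadd x y) = Cadd (ip z x) (ip z y).
Proof. rewrite ipC ipA (ipC x z) (ipC y z). ceq. Qed.
Lemma ipSr a (x z : X) : ip z (vscal a x) = Cmul (Cconj a) (ip z x).
Proof. rewrite ipC ipS (ipC x z). ceq. Qed.
Lemma ip0r (z : X) : ip z vzero = C0.
Proof. rewrite ipC ip0. ceq. Qed.

Lemma quad (u v : X) (l : R) :
  fst (ip (vadd u (vscal (l, 0) v)) (vadd u (vscal (l, 0) v))) =
  fst (ip u u) + 2 * l * fst (ip u v) + l ^ 2 * fst (ip v v).
Proof.
rewrite ipA !ipAr !ipS !ipSr (ipC u v). cunf; simpl; ring.
Qed.

Lemma CS_re (u v : X) : (fst (ip u v)) ^ 2 <= fst (ip u u) * fst (ip v v).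
Proof.
have P l := quad u v l.
have Pp l := ipP (vadd u (vscal (l, 0) v)).
set A := fst (ip u u) in P Pp *. set B := fst (ip v v) in P Pp *.
set Rr := fst (ip u v) in P Pp *.
have hA : 0 <= A := ipP u. have hB : 0 <= B := ipP v.
destruct (Rlt_dec 0 B) as [hb|hb].
- have := Pp (- Rr / B). rewrite P => h.
  have e : A + 2 * (- Rr / B) * Rr + (- Rr / B) ^ 2 * B = A - Rr ^ 2 / B by field; lra.
  rewrite e in h.
  have : Rr ^ 2 / B <= A by lra.
  move=> h2. apply Rmult_le_reg_r with (/ B). by apply Rinv_0_lt_compat.
  have e2 : A * B * / B = A by field; lra. rewrite e2. exact h2.
- have hB0 : B = 0 by lra.
  destruct (Req_dec Rr 0) as [hr|hr].
  + rewrite hr hB0; lra.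
  + have := Pp (- (A + 1) / (2 * Rr)). rewrite P hB0 => h.
    have e : A + 2 * (- (A + 1) / (2 * Rr)) * Rr + (- (A + 1) / (2 * Rr)) ^ 2 * 0 = -1
      by field.
    lra.
Qed.

Definition ci : Defs.C := (0, 1).

Lemma im_re (u v : X) : snd (ip u v) = fst (ip u (vscal ci v)).
Proof. rewrite ipSr. cunf; unfold ci; simpl; ring. Qed.
Lemma norm_ci (v : X) : fst (ip (vscal ci v) (vscal ci v)) = fst (ip v v).
Proof. rewrite ipS ipSr. cunf; unfold ci; simpl; ring. Qed.

Lemma nr_bound (A : X -> X) (hA : forall x, fst (ip (A x) (A x)) <= fst (ip x x)) x :
  Rabs (fst (ip (A x) x)) <= fst (ip x x) /\ Rabs (snd (ip (A x) x)) <= fst (ip x x).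
Proof.
have h1 := CS_re (A x) x. have h2 := CS_re (A x) (vscal ci x).
rewrite norm_ci -im_re in h2. have := hA x. have := ipP (A x). have := ipP x.
move=> p1 p2 p3. split; apply Rabs_le; split; nra.
Qed.
End D.
Lemma abs_le_bw x m : Rabs x <= m -> -m <= x <= m.
Proof. split_Rabs; lra. Qed.

Lemma Cdist_bound (z w : Defs.C) e : Cdist z w < e ->
  Rabs (fst z - fst w) < e /\ Rabs (snd z - snd w) < e.
Proof.
rewrite /Cdist /Cmod; cunf; simpl => h.
set x := fst z + - fst w in h. set y := snd z + - snd w in h.
have ex : Rabs (fst z - fst w) = sqrt (Rsqr x) by rewrite sqrt_Rsqr_abs.
have ey : Rabs (snd z - snd w) = sqrt (Rsqr y) by rewrite sqrt_Rsqr_abs.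
rewrite ex ey /Rsqr; split; apply: Rle_lt_trans h; apply sqrt_le_1_alt; nra.
Qed.

Lemma closure_le a b r (K : Defs.C -> Prop) z :
  (forall w, K w -> a * fst w + b * snd w <= r) -> Cclosure K z ->
  a * fst z + b * snd z <= r.
Proof.
move=> hK hz. apply Rnot_lt_le => hlt.
set g := a * fst z + b * snd z - r.
have hg : 0 < g by rewrite /g; lra.
have hM : 0 < Rabs a + Rabs b + 1 by have := Rabs_pos a; have := Rabs_pos b; lra.
have [w [Kw hw]] := hz (g / (Rabs a + Rabs b + 1)) (Rdiv_lt_0_compat _ _ hg hM).
have [h1 h2] := Cdist_bound _ _ _ hw.
have := hK w Kw.
set e := g / (Rabs a + Rabs b + 1) in h1 h2.
have he : e * (Rabs a + Rabs b + 1) = g by rewrite /e; field; lra.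
have t1 : Rabs (a * (fst z - fst w)) <= Rabs a * e.
  rewrite Rabs_mult; apply Rmult_le_compat_l; [apply Rabs_pos|lra].
have t2 : Rabs (b * (snd z - snd w)) <= Rabs b * e.
  rewrite Rabs_mult; apply Rmult_le_compat_l; [apply Rabs_pos|lra].
have he0 : 0 < e by rewrite /e; apply Rdiv_lt_0_compat.
move: t1 t2; rewrite /g in he.
move/abs_le_bw => t1 /abs_le_bw t2 hw2.
have : Rabs a * e + Rabs b * e < g by rewrite /g; nra.
rewrite /g; lra.
Qed.

Lemma margin a b c (K : Defs.C -> Prop) : (a, b) <> (0, 0) ->
  (forall z, K z -> Rabs (fst z) <= 1 /\ Rabs (snd z) <= 1) ->
  (forall z, Cclosure K z -> half_plane a b c z) ->
  exists m, 0 < m /\ forall z, K z -> a * fst z + b * snd z <= c - m.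
Proof.
move=> hab hbd hcl.
destruct (classic (exists m, 0 < m /\ forall z, K z -> a * fst z + b * snd z <= c - m))
  as [h|h]; first exact h. exfalso.
have KK z : K z -> Cclosure K z.
  move=> Kz eps he; exists z; split => //. rewrite /Cdist /Cmod; cunf; simpl.
  have -> : (fst z + - fst z) * (fst z + - fst z) + (snd z + - snd z) * (snd z + - snd z) = 0 by ring.
  by rewrite sqrt_0.
have hseq n : exists z, K z /\ c - / (INR n + 1) < a * fst z + b * snd z.
  apply NNPP => hn; apply h; exists (/ (INR n + 1)); split.
    apply Rinv_0_lt_compat; have := pos_INR n; lra.
  move=> z Kz; apply Rnot_lt_le => hl; apply hn; by exists z.
pose w n := proj1_sig (constructive_indefinite_description _ (hseq n)).
have hw n : K (w n) /\ c - / (INR n + 1) < a * fst (w n) + b * snd (w n).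
  exact: (proj2_sig (constructive_indefinite_description _ (hseq n))).
pose hh n := - b * fst (w n) + a * snd (w n).
set M := Rabs a + Rabs b.
have hb n : - M <= hh n <= M.
  have [b1 b2] := hbd _ (proj1 (hw n)). rewrite /hh /M.
  apply abs_le_bw. apply: Rle_trans (Rabs_triang _ _) _.
  rewrite !Rabs_mult Rabs_Ropp (Rplus_comm (Rabs a)). apply Rplus_le_compat.
  + have := Rabs_pos b. have := Rabs_pos (fst (w n)). move=> *; nra.
  + have := Rabs_pos a. have := Rabs_pos (snd (w n)). move=> *; nra.
have [l hl] := Bolzano_Weierstrass hh _ (compact_P3 (- M) M) hb.
have hD : 0 < a ^ 2 + b ^ 2.
  destruct (Req_dec a 0) as [->|ha]; last nra.
  destruct (Req_dec b 0) as [->|hb0]; last nra. by case: hab.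
set D := a ^ 2 + b ^ 2 in hD.
pose z0 : Defs.C := ((a * c - b * l) / D, (b * c + a * l) / D).
have hz0 : Cclosure K z0.
  move=> eps heps.
  set dl := Rmin 1 (eps ^ 2 * D / 4).
  have hdl : 0 < dl by apply Rmin_pos; [lra|]; have := pow_lt _ 2 heps; nra.
  have [N hN] := INR_archimed dl 1 hdl.
  have [p [hp hV]] := hl (disc l (mkposreal dl hdl)) N
    (ex_intro _ (mkposreal dl hdl) (fun x hx => hx)).
  have [Kp hfp] := hw p.
  exists (w p); split => //.
  have hlt := hcl _ (KK _ Kp); move: hlt; cunf; simpl => hlt.
  have hpN : INR N <= INR p by by apply le_INR.
  have hinv : / (INR p + 1) <= / (INR N + 1).
    apply Rinv_le_contravar => //; have := pos_INR N; lra.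
  have hinvN : / (INR N + 1) < dl.
    apply (Rmult_lt_reg_r (INR N + 1)); first (have := pos_INR N; lra).
    rewrite Rinv_l; last (have := pos_INR N; lra). nra.
  move: hV; rewrite /disc /= /hh => hV.
  apply Rabs_def2 in hV. case: hV => hV1 hV2.
  have hdl1 : dl <= 1 by apply Rmin_l.
  have hdl2 : dl <= eps ^ 2 * D / 4 by apply Rmin_r.
  rewrite /Cdist /Cmod; cunf; rewrite /z0 /=.
  set dx := (a * c - b * l) / D + - fst (w p).
  set dy := (b * c + a * l) / D + - snd (w p).
  have e1 : a * dx + b * dy = c - (a * fst (w p) + b * snd (w p)).
    rewrite /dx /dy /D; field; rewrite -/D; lra.
  have e2 : - b * dx + a * dy = l - (- b * fst (w p) + a * snd (w p)).
    rewrite /dx /dy /D; field; rewrite -/D; lra.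
  have e3 : (dx * dx + dy * dy) * D = (a * dx + b * dy) ^ 2 + (- b * dx + a * dy) ^ 2.
    rewrite /D; ring.
  rewrite e1 e2 in e3.
  set u := c - (a * fst (w p) + b * snd (w p)) in e3.
  set v := l - (- b * fst (w p) + a * snd (w p)) in e3.
  have hu : 0 < u < dl by rewrite /u; lra.
  have hv : Rabs v < dl by rewrite /v; apply Rabs_def1; lra.
  have hv2 : v ^ 2 < dl ^ 2.
    rewrite -(pow2_abs v). have := Rabs_pos v. nra.
  have hlt2 : dx * dx + dy * dy < eps ^ 2.
    apply (Rmult_lt_reg_r D) => //. rewrite e3. nra.
  rewrite -(sqrt_pow2 eps); last lra.
  apply sqrt_lt_1_alt; split; [nra|exact hlt2].
have := hcl _ hz0. cunf; rewrite /z0 /=.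
have -> : a * ((a * c - b * l) / D) + b * ((b * c + a * l) / D) = c.
  rewrite /D; field; rewrite -/D; lra.
lra.
Qed.
Lemma quad_bound X (hX : preip X) (A As : X -> X) (hlin : is_linear A)
  (hadj : is_adjoint A As) a b r
  (hW : forall z, numrange A z -> a * fst z + b * snd z < r) (q : X) :
  a * fst (ip (A q) q) + b * snd (ip (A q) q) <= r * fst (ip q q).
Proof.
have ht := ipP _ hX q.
destruct (Req_dec (fst (ip q q)) 0) as [h0|hpos].
- have c1 := CS_re _ hX (A q) q. have c2 := CS_re _ hX (A q) (vscal ci q).
  rewrite (norm_ci _ hX) -(im_re _ hX) h0 Rmult_0_r in c2. rewrite h0 Rmult_0_r in c1.
  have e1 : fst (ip (A q) q) = 0 by nra.
  have e2 : snd (ip (A q) q) = 0 by nra.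
  rewrite e1 e2 h0; lra.
- set t := fst (ip q q) in ht hpos *.
  have htp : 0 < t by lra.
  have hs : 0 < sqrt t by apply sqrt_lt_R0.
  set l := / sqrt t.
  have hl2 : l ^ 2 * t = 1.
    have e0 := sqrt_sqrt t ltac:(lra). rewrite /l. replace t with (sqrt t * sqrt t) at 2 by exact e0. field; lra.
  set q2 := vadd (vscal (l, 0) q) vzero.
  have hA0 w : ip (A vzero) w = C0 by rewrite hadj (ip0 _ hX).
  have eA : ip (A q2) q2 = Cmul (l ^ 2, 0) (ip (A q) q).
    rewrite /q2 hlin (ipA _ hX) (ipS _ hX) hA0 !(ipAr _ hX) (ipSr _ hX) !(ip0r _ hX). ceq.
  have eN : ip q2 q2 = Cmul (l ^ 2, 0) (ip q q).
    rewrite /q2 (ipA _ hX) (ipS _ hX) (ip0 _ hX) !(ipAr _ hX) (ipSr _ hX) !(ip0r _ hX). ceq.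
  have hn : numrange A (ip (A q2) q2).
    exists q2; split => //. rewrite /vnorm eN. cunf; simpl.
    rewrite -/t. have -> : l ^ 2 * t - 0 * snd (ip q q) = 1 by rewrite hl2; ring.
    exact sqrt_1.
  have := hW _ hn. rewrite eA. cunf; simpl.
  move=> h.
  have e : r * t = r * (l ^ 2 * t) * t by rewrite hl2; ring.
  apply (Rmult_le_reg_l (l ^ 2)). apply pow_lt; apply Rinv_0_lt_compat; lra.
  have : a * (l ^ 2 * fst (ip (A q) q) - 0 * snd (ip (A q) q)) +
     b * (l ^ 2 * snd (ip (A q) q) + 0 * fst (ip (A q) q)) = 
     l ^ 2 * (a * fst (ip (A q) q) + b * snd (ip (A q) q)) by ring.
  move=> e'. rewrite e' in h. nra.
Qed.
Lemma in_closure (K : Defs.C -> Prop) z : K z -> Cclosure K z.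
Proof.
move=> Kz eps he; exists z; split => //. rewrite /Cdist /Cmod; cunf; simpl.
have -> : (fst z + - fst z) * (fst z + - fst z) + (snd z + - snd z) * (snd z + - snd z) = 0 by ring.
by rewrite sqrt_0.
Qed.

Lemma closure_mono (K1 K2 : Defs.C -> Prop) : (forall z, K1 z -> K2 z) ->
  forall z, Cclosure K1 z -> Cclosure K2 z.
Proof. move=> h z hz eps he. have [w [k hw]] := hz eps he. exists w; auto. Qed.

Lemma iso_ip (X : IPS) (U Us : X -> X) : is_adjoint U Us -> (forall x, Us (U x) = x) ->
  forall x, ip (U x) (U x) = ip x x.
Proof. move=> h1 h2 x. by rewrite h1 h2. Qed.

Lemma vnorm1 (X : IPS) (hX : preip X) (p : X) : vnorm p = 1 -> fst (ip p p) = 1.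
Proof.
rewrite /vnorm => h. have := sqrt_sqrt _ (ipP _ hX p). rewrite h. lra.
Qed.

Theorem lemma6p1 (H H' : IPS) (hH : is_hilbert H) (hH' : is_hilbert H')
  (N : nat) (T Ts : H -> H) (V : H' -> H')
  (hT : contraction T) (hTs : is_adjoint T Ts)
  (hDT : defect_dim T Ts N) (hDTs : defect_dim Ts T N)
  (hV : unitary V)
  (hwrap : wraps (unitary_dilation N T)
                 (fun U => Cclosure (numrange U))
                 (Cclosure (numrange T))) :
  wraps (unitary_dilation N (opsum T V))
        (fun U => Cclosure (numrange U))
        (Cclosure (numrange (opsum T V))).
Proof.
move=> a b c hab hHP.
have pH := hilbert_preip H hH. have pH' := hilbert_preip H' hH'.
have pHH := prod_preip _ _ pH pH'.
case: hV => [[hVlin _] [Vs [hVadj [hVVs hVsV]]]].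
case: hT => [[hTlin _] hTn].
have isoV := iso_ip _ _ _ hVadj hVsV.
have hTc x : fst (ip (T x) (T x)) <= fst (ip x x).
  apply sqrt_le_0; [apply (ipP _ pH)|apply (ipP _ pH)|apply hTn].
have hbd z : numrange (opsum T V) z -> Rabs (fst z) <= 1 /\ Rabs (snd z) <= 1.
  move=> [p [hp ->]]. have e := vnorm1 _ pHH _ hp. rewrite -e.
  apply: (nr_bound _ pHH (opsum T V)) => q. rewrite /opsum /=.
  rewrite isoV. have := hTc q.1. cunf; simpl; lra.
have sub1 z : numrange T z -> numrange (opsum T V) z.
  move=> [x [hx ->]]. exists (x, vzero); split.
    rewrite /vnorm /= (ip0 _ pH'). rewrite -hx /vnorm. cunf; simpl. by rewrite Rplus_0_r.
  rewrite /opsum /= (ip0r _ pH'). ceq.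
have sub2 z : numrange V z -> numrange (opsum T V) z.
  move=> [y [hy ->]]. exists (vzero, y); split.
    rewrite /vnorm /= (ip0 _ pH). rewrite -hy /vnorm. cunf; simpl. by rewrite Rplus_0_l.
  rewrite /opsum /= (ip0r _ pH). ceq.
have [m [hm hmarg]] := margin a b c _ hab hbd hHP.
set c' := c - m / 2.
have hTcl : forall z, Cclosure (numrange T) z -> half_plane a b c' z.
  move=> z hz. have := closure_le a b (c - m) _ z hmarg (closure_mono _ _ sub1 z hz).
  cunf; rewrite /c'; lra.
have [U [[hUunit hUdil] hUW]] := hwrap a b c' hab hTcl.
have hUW' z : numrange U z -> a * fst z + b * snd z < c'.
  move=> hz. have := hUW z (in_closure _ _ hz). by cunf.
have hVW z : numrange V z -> a * fst z + b * snd z < c'.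
  move=> hz. have := hmarg z (sub2 z hz). rewrite /c'; lra.
case: hUunit => [[hUlin _] [Us [hUadj [hUUs hUsU]]]].
have isoU := iso_ip _ _ _ hUadj hUsU.
pose U1 := fun p : prodIPS (prodIPS H H') (CN N) =>
  (((U (p.1.1, p.2)).1, V p.1.2), (U (p.1.1, p.2)).2) : prodIPS (prodIPS H H') (CN N).
pose Us1 := fun p : prodIPS (prodIPS H H') (CN N) =>
  (((Us (p.1.1, p.2)).1, Vs p.1.2), (Us (p.1.1, p.2)).2) : prodIPS (prodIPS H H') (CN N).
exists U1; split.
- split.
  + split.
    * split.
      -- move=> a0 [[x y] v] [[x' y'] v']. rewrite /U1 /=.
         have := hUlin a0 (x, v) (x', v'). rewrite /= => ->. by rewrite hVlin.
      -- exists 1 => [[[x y] v]]. rewrite Rmult_1_l /vnorm /U1 /=.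
         have e := f_equal fst (isoU (x, v)). rewrite isoV. move: e; simpl.
         cunf; simpl => e. apply sqrt_le_1_alt; lra.
    * exists Us1; split; [|split].
      -- move=> [[x y] v] [[x' y'] v']. rewrite /U1 /Us1 /=.
         have e := hUadj (x, v) (x', v'). move: e; rewrite /= => e.
         rewrite hVadj. move: e. cunf => e.
         have e1 := f_equal fst e. have e2 := f_equal snd e. simpl in e1, e2.
         apply injective_projections; simpl; lra.
      -- move=> [[x y] v]. rewrite /U1 /Us1 /= -surjective_pairing hUUs /=. by rewrite hVVs.
      -- move=> [[x y] v]. rewrite /U1 /Us1 /= -surjective_pairing hUsU /=. by rewrite hVsV.
  + move=> [x y]. rewrite /U1 /opsum /=. by rewrite hUdil.
- move=> z hz.
  suff hK : forall w, numrange U1 w -> a * fst w + b * snd w <= c'.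
    have := closure_le a b c' _ z hK hz. cunf; rewrite /c'; lra.
  + move=> w [[[x y] v] [hn ->]].
    have hn1 := vnorm1 _ (prod_preip _ _ pHH (CN_preip N)) _ hn.
    have qU := quad_bound _ (prod_preip _ _ pH (CN_preip N)) U Us hUlin hUadj a b c' hUW' (x, v).
    have qV := quad_bound _ pH' V Vs hVlin hVadj a b c' hVW y.
    move: hn1 qU qV. rewrite /U1 /=. cunf; simpl. move=> *. nra.
Qed.
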